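(* Consider a single agent with finite action set $A$, $|A|=m\ge 2$, and unknown utility $U:A\to[0,1]$, interacting with a principal over rounds; in each round $t$ the principal chooses a payment $P^t:A\to\mathbb{R}_+$, and the agent plays an action maximizing $U(a)+P^t(a)$, which the principal observes. Consider the principal's algorithm that, for each action $a\in A$, uses $\mathcal{O}(\log(1/\varepsilon))$ iterations of binary search to approximate to precision $\varepsilon$ the smallest value $P^*(a)\in[0,1]$ such that the agent plays $a$ when paid $P^*(a)$ for action $a$ and $0$ for all other actions (one round per binary-search query), and then outputs $\tilde U:=-P^*$. This algorithm $\varepsilon$-learns every such single-agent game using $\mathcal{O}(m\log(1/\varepsilon))$ rounds.
   Context: A principal $\varepsilon$-learns the game if it outputs $\tilde U:A\to\mathbb{R}$ such that there is a constant $W\in\mathbb{R}$ with $|U(a)+W-\tilde U(a)|\le\varepsilon$ for all $a\in A$. The principal initially knows only $A$ and that utilities lie in $[0,1]$. *)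

(* Defs.v *)
From HB Require Import structures.
From mathcomp Require Import all_boot all_order all_algebra.
From mathcomp Require Import all_classical all_reals all_analysis.
Set Implicit Arguments. Unset Strict Implicit. Unset Printing Implicit Defensive.
Import Order.TTheory GRing.Theory Num.Theory.
Local Open Scope ring_scope.

Section Learning.
Variables (R : realType) (A : finType).

Definition eps_learns (U Ut : A -> R) (eps : R) : Prop :=
  exists W : R, forall a : A, `|U a + W - Ut a| <= eps.

(* Agent behaviour: at round t, facing payment P, the agent plays br t P.
   br t P must be a best response (maximizer of U + P); ties arbitrary. *)
Definition best_responder (U : A -> R) (br : nat -> (A -> R) -> A) : Prop :=
  forall (t : nat) (P : A -> R) (b : A), U b + P b <= U (br t P) + P (br t P).

Definition pay_only (a : A) (p : R) : A -> R := fun b => if b == a then p else 0.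

(* Binary search for the smallest payment making the agent play a.
   Invariant: lo <= threshold <= hi. One round per query.
   Returns (final hi, next round index). *)
Fixpoint bsearch (br : nat -> (A -> R) -> A) (a : A) (t k : nat) (lo hi : R)
    : R * nat :=
  match k with
  | 0%N => (hi, t)
  | k'.+1 =>
      let p := (lo + hi) / 2 in
      if br t (pay_only a p) == a then bsearch br a t.+1 k' lo p
      else bsearch br a t.+1 k' p hi
  end.

Fixpoint learn_aux (br : nat -> (A -> R) -> A) (k : nat) (s : seq A) (t : nat)
    : (A -> R) * nat :=
  match s with
  | [::] => (fun _ => 0, t)
  | a :: s' =>
      let r1 := bsearch br a t k 0 1 in
      let r2 := learn_aux br k s' r1.2 in
      (fun b => if b == a then - r1.1 else r2.1 b, r2.2)
  end.

Definition n_iter (eps : R) : nat := (Num.truncn (ln (1 / eps) / ln 2)).+1.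

Definition learn_alg (br : nat -> (A -> R) -> A) (eps : R) : (A -> R) * nat :=
  learn_aux br (n_iter eps) (enum A) 0.

End Learning.

(* Main.v *)
Require Import Defs.
From HB Require Import structures.
From mathcomp Require Import all_boot all_order all_algebra.
From mathcomp Require Import all_classical all_reals all_analysis.
From mathcomp Require Import lra ring.
Import Order.TTheory GRing.Theory Num.Theory.
Local Open Scope ring_scope.

Section Aux.
Variables (R : realType) (A : finType) (br : nat -> (A -> R) -> A).

Lemma bsearch_spec (a : A) (S : R) :
  (forall t p, 0 <= p -> br t (pay_only a p) == a -> S <= p) ->
  (forall t p, br t (pay_only a p) != a -> p <= S) ->
  forall k t lo hi, 0 <= lo -> lo <= S -> S <= hi ->
  (bsearch br a t k lo hi).2 = (t + k)%N /\ S <= (bsearch br a t k lo hi).1 /\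
  (bsearch br a t k lo hi).1 - S <= (hi - lo) / 2 ^+ k.
Proof.
move=> H1 H2; elim=> [|k IH] t lo hi h0 hl hh /=.
  by rewrite addn0 expr0 divr1; split=> //; lra.
have p0 : 0 <= (lo + hi) / 2 by apply: divr_ge0 => //; lra.
case: ifP => hb.
  have := IH t.+1 lo ((lo+hi)/2) h0 hl (H1 _ _ p0 hb).
  move=> [-> [h3 h4]]; rewrite addSnnS; split=> //; split=> //.
  apply: (le_trans h4); rewrite exprS le_eqVlt; apply/orP; left; apply/eqP.
  (field; first exact: expf_neq0); idtac.
have := IH t.+1 ((lo+hi)/2) hi p0 (H2 _ _ (negbT hb)) hh.
move=> [-> [h3 h4]]; rewrite addSnnS; split=> //; split=> //.
apply: (le_trans h4); rewrite exprS le_eqVlt; apply/orP; left; apply/eqP.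
(field; first exact: expf_neq0); idtac.
Qed.


Lemma learn_aux_spec (S : A -> R) (k : nat) :
  (forall a t p, 0 <= p -> br t (pay_only a p) == a -> S a <= p) ->
  (forall a t p, br t (pay_only a p) != a -> p <= S a) ->
  (forall a, 0 <= S a <= 1) ->
  forall s t, (learn_aux br k s t).2 = (t + k * size s)%N /\
  forall b, b \in s -> S b <= - (learn_aux br k s t).1 b <= S b + 1 / 2 ^+ k.
Proof.
move=> H1 H2 HS; elim=> [|a s IH] t /=; first by rewrite muln0 addn0.
have /andP [Sa0 Sa1] := HS a.
have [e1 [e2 e3]] := @bsearch_spec a (S a) (H1 a) (H2 a) k t 0 1 (lexx (0:R)) Sa0 Sa1.
have [f1 f2] := IH (bsearch br a t k 0 1).2.
split; first by rewrite f1 e1 mulnS addnA.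
move=> b; rewrite in_cons; case: eqP => [-> _|_ /= bs]; last exact: f2.
rewrite opprK e2 /=; rewrite subr0 in e3; lra.
Qed.

End Aux.

Theorem theorem4p1 (R : realType) :
  exists C : R, 0 < C /\
  forall (A : finType) (U : A -> R) (br : nat -> (A -> R) -> A) (eps : R),
    (2 <= #|A|)%N ->
    (forall a, 0 <= U a <= 1) ->
    best_responder U br ->
    0 < eps <= 1 / 2 ->
    eps_learns U (learn_alg br eps).1 eps /\
    ((learn_alg br eps).2)%:R <= C * #|A|%:R * ln (1 / eps).
Proof.
have ln2 : 0 < ln (2 : R) by apply: ln_gt0; lra.
exists (2 / ln 2); split; first by apply: divr_gt0.
move=> A U br eps hA hU hbr /andP [e0 e1].
have [a0 _] : exists a0 : A, a0 \in A by apply/card_gt0P; apply: leq_trans hA.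
pose m := [arg max_(i > a0) U i]%O.
have hm : forall b, U b <= U m.
  by rewrite /m; case: arg_maxP => // i _ H b; apply: H.
pose S := fun a => U m - U a.
have H1 : forall a t p, 0 <= p -> br t (pay_only a p) == a -> S a <= p.
  move=> a t p p0 /eqP hb; rewrite /S.
  have := hbr t (pay_only a p) m; rewrite hb /pay_only eqxx.
  case: eqP => [->|_]; lra.
have H2 : forall a t p, br t (pay_only a p) != a -> p <= S a.
  move=> a t p hb; rewrite /S.
  have := hbr t (pay_only a p) a; rewrite /pay_only eqxx (negbTE hb).
  have := hm (br t (fun b => if b == a then p else 0)); lra.
have HS : forall a, 0 <= S a <= 1.
  move=> a; rewrite /S; have := hm a; have := hU a; have := hU m; lra.
set k := n_iter eps.
have [r1 r2] := @learn_aux_spec R A br S k H1 H2 HS (enum A) 0.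
have x1 : 1 <= ln (1 / eps) / ln 2.
  rewrite ler_pdivlMr // !mul1r ler_ln ?posrE ?invr_gt0 //.
  rewrite -div1r ler_pdivlMr //; move: e1; rewrite ler_pdivlMr //; lra.
have kx : k%:R <= 2 * (ln (1 / eps) / ln 2).
  rewrite /k /n_iter -addn1 natrD.
  have h : (Num.truncn (ln (1 / eps) / ln 2))%:R <= ln (1 / eps) / ln 2.
    by rewrite truncn_le; apply: le_trans x1.
  move: h; rewrite -/(Num.truncn _); lra.
have kgt : ln (1 / eps) / ln 2 < k%:R by apply: truncnS_gt.
have pk : 1 / 2 ^+ k <= eps.
  rewrite ler_pdivrMr ?exprn_gt0 //.
  have : 1 / eps < 2 ^+ k.
    rewrite -(ltr_ln) ?posrE ?exprn_gt0 ?divr_gt0 // lnXn //.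
    by rewrite ltr_pdivrMr // mulr_natl in kgt.
  move=> h; have : eps * (1 / eps) <= eps * 2 ^+ k by rewrite ler_pM2l // ltW.
  have -> : eps * (1 / eps) = 1 by field; rewrite lt0r_neq0.
  by [].
split.
  exists (- U m) => a.
  have /r2 := mem_enum A a; rewrite /S => h.
  rewrite /learn_alg -/k ler_norml; move: h pk.
  move: ((learn_aux br k (enum A) 0).1 a) (1 / 2 ^+ k) (U a) (U m) => x y u v.
  move=> /andP [h1 h2] h3; apply/andP; split; lra.
rewrite /learn_alg -/k r1 add0n -cardE natrM.
have c0 : 0 <= (#|A|%:R : R) by apply: ler0n.
move: kx c0; move: (ln (1 / eps)) (ln (2:R)) (#|A|%:R : R) (k%:R : R) => L l c x hx c0.
have -> : 2 / l * c * L = c * (2 * (L / l)) by ring.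
by rewrite mulrC ler_wpM2l.
Qed.
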